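(* Let $\mathbb{X}=\langle X,\le\rangle$ be a poset such that ${\downarrow}x=\{y\in X: y\le x\}$ is cofinite in $X$ for every $x\in X$. Then the root compactification of $\mathbb{X}$ is an Esakia space.
   Context: The root compactification of a poset $\mathbb{X}$ is the ordered topological space obtained by adding a new element $\bot$ below all elements of $X$ (giving the poset $X\cup\{\bot\}$) and declaring a subset $U\subseteq X\cup\{\bot\}$ open iff either $\bot\notin U$ or $U$ is cofinite. An Esakia space is a compact ordered topological space $\langle X,\tau,\le\rangle$ such that ${\downarrow}U$ is clopen for every clopen $U$, and such that whenever $x\not\le y$ there is a clopen upset containing $x$ but not $y$. *)

(* Defs.v *)
From Stdlib Require Import List.

Definition set (T : Type) := T -> Prop.

Definition finite_set {T : Type} (A : set T) : Prop :=
  exists l : list T, forall x, A x -> In x l.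
Definition cofinite {T : Type} (A : set T) : Prop :=
  finite_set (fun x => ~ A x).

Definition is_partial_order {T : Type} (le : T -> T -> Prop) : Prop :=
  (forall x, le x x) /\
  (forall x y, le x y -> le y x -> x = y) /\
  (forall x y z, le x y -> le y z -> le x z).

Definition downset {T : Type} (le : T -> T -> Prop) (x : T) : set T :=
  fun y => le y x.

Definition is_topology {T : Type} (open : set T -> Prop) : Prop :=
  open (fun _ => True) /\
  (forall F : set T -> Prop, (forall U, F U -> open U) ->
     open (fun x => exists U, F U /\ U x)) /\
  (forall U V, open U -> open V -> open (fun x => U x /\ V x)).

Definition compact_space {T : Type} (open : set T -> Prop) : Prop :=
  forall C : set T -> Prop,
    (forall U, C U -> open U) ->
    (forall x, exists U, C U /\ U x) ->
    exists l : list (set T),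
      (forall U, In U l -> C U) /\ (forall x, exists U, In U l /\ U x).

Definition clopen {T : Type} (open : set T -> Prop) (U : set T) : Prop :=
  open U /\ open (fun x => ~ U x).

Definition is_upset {T : Type} (le : T -> T -> Prop) (U : set T) : Prop :=
  forall x y, U x -> le x y -> U y.

Definition down {T : Type} (le : T -> T -> Prop) (U : set T) : set T :=
  fun y => exists x, U x /\ le y x.

Definition esakia_space {T : Type} (open : set T -> Prop)
    (le : T -> T -> Prop) : Prop :=
  is_topology open /\ is_partial_order le /\ compact_space open /\
  (forall U, clopen open U -> clopen open (down le U)) /\
  (forall x y, ~ le x y ->
     exists U, clopen open U /\ is_upset le U /\ U x /\ ~ U y).

(** Root compactification: carrier [option X], [None] is the new bottom. *)
Definition root_le {X : Type} (le : X -> X -> Prop) (a b : option X) : Prop :=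
  match a, b with
  | None, _ => True
  | Some _, None => False
  | Some x, Some y => le x y
  end.

Definition root_open {X : Type} (U : set (option X)) : Prop :=
  ~ U None \/ cofinite U.

(* Main.v *)
Require Import Defs.
From Stdlib Require Import List Classical.

Lemma cof_mono {T} (A B : set T) : cofinite A -> (forall x, A x -> B x) -> cofinite B.
Proof.
  intros [l Hl] H. exists l. intros x Hx. apply Hl. intro Ha. apply Hx, H, Ha.
Qed.

Lemma cover_list {T} (C : set T -> Prop) (l : list T) :
  (forall x, exists U, C U /\ U x) ->
  exists m : list (set T), (forall U, In U m -> C U) /\
    (forall x, In x l -> exists U, In U m /\ U x).
Proof.
  intros H. induction l as [|a l IH].
  - exists nil. split; [intros U []| intros x []].
  - destruct IH as [m [Hm1 Hm2]]. destruct (H a) as [Ua [HC Hu]].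
    exists (Ua :: m). split.
    + intros U [<-|HU]; auto.
    + intros x [<-|Hx].
      * exists Ua. split; simpl; auto.
      * destruct (Hm2 x Hx) as [U [HU1 HU2]]. exists U. split; simpl; auto.
Qed.

Theorem mainTheorem3 (X : Type) (le : X -> X -> Prop) :
  is_partial_order le ->
  (forall x : X, cofinite (downset le x)) ->
  esakia_space (@root_open X) (root_le le).
Proof.
  intros [Hrefl [Hanti Htrans]] Hcof.
  split; [|split; [|split; [|split]]].
  -
    split; [|split].
    + right. exists nil. intros x Hx. exfalso. apply Hx. exact I.
    + intros F HF. destruct (classic (exists U, F U /\ U None)) as [[U [HFU HU]]|Hn].
      * right. destruct (HF U HFU) as [H|H]; [contradiction|].
        apply (cof_mono U); auto. intros x Hx. exists U. auto.
      * left. exact Hn.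
    + intros U V [HU|HU] [HV|HV].
      * left. intros [? ?]; auto.
      * left. intros [? ?]; auto.
      * left. intros [? ?]; auto.
      * right. destruct HU as [l1 H1]. destruct HV as [l2 H2].
        exists (l1 ++ l2). intros x Hx. apply in_or_app.
        destruct (classic (U x)) as [Hu|Hu].
        -- right. apply H2. intro Hv. apply Hx. auto.
        -- left. apply H1. exact Hu.
  -
    split; [|split].
    + intros [x|]; simpl; auto.
    + intros [x|] [y|]; simpl; intros H1 H2; try contradiction; auto.
      f_equal. auto.
    + intros [x|] [y|] [z|]; simpl; intros H1 H2; try contradiction; eauto.
  -
    intros C HC Hcov. destruct (Hcov None) as [U0 [HU0 HN]].
    destruct (HC U0 HU0) as [H|[l Hl]]; [contradiction|].
    destruct (cover_list C l Hcov) as [m [Hm1 Hm2]].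
    exists (U0 :: m). split.
    + intros U [<-|HU]; auto.
    + intros x. destruct (classic (U0 x)) as [Hx|Hx].
      * exists U0. split; simpl; auto.
      * destruct (Hm2 x (Hl x Hx)) as [U [HU1 HU2]]. exists U. split; simpl; auto.
  -
    intros U [HUo _].
    destruct (classic (exists x, U x)) as [[x Hx]|Hn].
    + assert (HdN : down (root_le le) U None) by (exists x; split; simpl; auto).
      split.
      * right. destruct x as [a|].
        -- destruct (Hcof a) as [l Hl]. exists (None :: map Some l).
           intros [y|] Hy.
           ++ right. apply in_map. apply Hl. intro Hya. apply Hy.
              exists (Some a). split; simpl; auto.
           ++ contradiction.
        -- destruct HUo as [H|H]; [contradiction|].
           apply (cof_mono U); auto. intros y Hy. exists y. split; auto.
           destruct y; simpl; auto.
      * left. intro H. apply H. exact HdN.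
    + split.
      * left. intros [y [Hy _]]. apply Hn. eauto.
      * right. exists nil. intros y Hy. exfalso. apply Hy. intros [z [Hz _]]. apply Hn. eauto.
  -
    intros [x|] b Hxb; [|exfalso; apply Hxb; exact I].
    exists (root_le le (Some x)). split; [|split; [|split]].
    + split.
      * left. simpl. auto.
      * right. destruct (Hcof x) as [l Hl]. exists (Some x :: map Some l).
        intros [z|] Hz; [|exfalso; apply Hz; intro H; exact H].
        apply NNPP in Hz. simpl in Hz.
        destruct (classic (le z x)) as [Hzx|Hzx].
        -- left. f_equal. apply Hanti; auto.
        -- right. apply in_map. apply Hl. exact Hzx.
    + intros [y|] [z|]; simpl; intros H1 H2; try contradiction; eauto.
    + simpl. auto.
    + exact Hxb.
Qed.
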